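(* Let $(X,d)$ be a complete Alexandrov space, $G\subset X$ a closed, geodesically convex set with $(G,d)$ separable, $K>0$, and $\mu\in\mathfrak P(F_K(G))$. Let $g(x):=\int_{F_K(G)}f(x)\,d\mu(f)$ and let $\mathbb E\mu\in G$ denote the unique minimizer of $g$ over $G$. Then for all $x\in G$, \[ d(x,\mathbb E\mu)^2\le\frac2K\int_{F_K(G)}\big[f(x)-f(\mathbb E\mu)\big]\,d\mu(f).\]
   Context: Minimal geodesics $x\#_ty$ satisfy $d(x\#_sy,x\#_ty)=|s-t|d(x,y)$. A function $h$ is $K$-convex if $h(x\#_ty)\le(1-t)h(x)+th(y)-\frac K2t(1-t)d(x,y)^2$ along all minimal geodesics. $F_K(G)$ is the set of lower semi-continuous $K$-convex functions $G\to(-\infty,\infty]$ not identically $+\infty$, equipped with the $\sigma$-field $\mathcal E$ generated by the sets $\{h:\inf_Oh<\alpha\}$ for $O\subseteq G$ open and $\alpha\in\mathbb R$ (equivalently, the Effros $\sigma$-field on epigraphs). $\mathfrak P(F_K(G))$ is the set of complete probability measures $\mu$ on $(F_K(G),\mathcal E)$ such that $g(x)=\int f(x)\,d\mu(f)$ is a lower semi-continuous, $(-\infty,+\infty]$-valued, $K$-convex function on $G$ that is finite at some point of $G$. *)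

(* Defs.v *)
From HB Require Import structures.
From mathcomp Require Import all_boot all_order all_algebra.
From mathcomp Require Import all_classical all_reals all_analysis.
Set Implicit Arguments. Unset Strict Implicit. Unset Printing Implicit Defensive.
Import Order.TTheory GRing.Theory Num.Theory.
Local Open Scope classical_set_scope.
Local Open Scope ring_scope.

Section MetricDefs.
Context {R : realType} {X : Type}.
Variable d : X -> X -> R.

Definition is_metric : Prop :=
  [/\ forall x y, 0 <= d x y,
      forall x y, d x y = 0 <-> x = y,
      forall x y, d x y = d y x &
      forall x y z, d x z <= d x y + d y z].

Definition metric_complete : Prop :=
  forall u : nat -> X,
    (forall e : R, 0 < e -> exists N, forall m n, (N <= m)%N -> (N <= n)%N ->
        d (u m) (u n) < e) ->
    exists l, forall e : R, 0 < e -> exists N, forall n, (N <= n)%N -> d (u n) l < e.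

(* gamma is a minimal geodesic from x to y, parametrized on [0,1]:
   gamma t = x #_t y, with d(x#_s y, x#_t y) = |s - t| d(x,y). *)
Definition min_geodesic (gamma : R -> X) (x y : X) : Prop :=
  [/\ gamma 0 = x, gamma 1 = y &
      forall s t, 0 <= s <= 1 -> 0 <= t <= 1 ->
        d (gamma s) (gamma t) = `|s - t| * d x y].

Definition geodesic_space : Prop :=
  forall x y, exists gamma, min_geodesic gamma x y.

Definition coshR (r : R) : R := (expR r + expR (- r)) / 2.
Definition sinhR (r : R) : R := (expR r - expR (- r)) / 2.

(* Triangle comparison (curvature bounded below by kappa), in the form of
   the comparison of the distance from a vertex x to a point gamma t of the
   opposite side with the corresponding distance in the model plane M_kappa
   (Stewart's formula in M_kappa). *)
Definition curv_bounded_below (kappa : R) : Prop :=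
  forall (x y z : X) (gamma : R -> X) (t : R),
    min_geodesic gamma y z -> 0 <= t <= 1 ->
    let a := d x y in let b := d x z in let L := d y z in
    let e := d x (gamma t) in
    (kappa = 0 ->
       (1 - t) * a ^+ 2 + t * b ^+ 2 - t * (1 - t) * L ^+ 2 <= e ^+ 2) /\
    (0 < kappa -> let s := Num.sqrt kappa in
       a + b + L < 2 * pi / s ->
       cos (s * e) * sin (s * L)
         <= cos (s * a) * sin (s * ((1 - t) * L)) + cos (s * b) * sin (s * (t * L))) /\
    (kappa < 0 -> let s := Num.sqrt (- kappa) in
       coshR (s * a) * sinhR (s * ((1 - t) * L)) + coshR (s * b) * sinhR (s * (t * L))
         <= coshR (s * e) * sinhR (s * L)).

Definition alexandrov_space : Prop :=
  [/\ is_metric, metric_complete, geodesic_space &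
      exists kappa : R, curv_bounded_below kappa].

Definition closed_set (G : set X) : Prop :=
  forall x, (forall e : R, 0 < e -> exists2 y, G y & d x y < e) -> G x.

Definition geod_convex (G : set X) : Prop :=
  forall x y gamma t, G x -> G y -> min_geodesic gamma x y -> 0 <= t <= 1 ->
    G (gamma t).

Definition separable_set (G : set X) : Prop :=
  exists D : set X, [/\ countable D, D `<=` G &
    forall x, G x -> forall e : R, 0 < e -> exists2 y, D y & d x y < e].

Definition pt (G : set X) := {x : X | G x}.

Definition open_in (G : set X) (O : set (pt G)) : Prop :=
  forall x, O x -> exists2 r : R, 0 < r &
    forall y : pt G, d (proj1_sig x) (proj1_sig y) < r -> O y.

Definition lsc_on (G : set X) (h : pt G -> \bar R) : Prop :=
  forall (x : pt G) (alpha : R), (alpha%:E < h x)%E ->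
    exists2 r : R, 0 < r &
      forall y : pt G, d (proj1_sig x) (proj1_sig y) < r -> (alpha%:E < h y)%E.

Definition K_convex (G : set X) (K : R) (h : pt G -> \bar R) : Prop :=
  forall (x y z : pt G) (gamma : R -> X) (t : R),
    min_geodesic gamma (proj1_sig x) (proj1_sig y) -> 0 <= t <= 1 ->
    gamma t = proj1_sig z ->
    (h z <= (1 - t)%:E * h x + t%:E * h y
            - (K / 2 * t * (1 - t) * (d (proj1_sig x) (proj1_sig y)) ^+ 2)%:E)%E.

Definition FK (G : set X) (K : R) : set (pt G -> \bar R) :=
  [set h | [/\ forall x, h x != -oo%E, lsc_on h, K_convex K h &
           exists x, h x != +oo%E]].

Definition effros_gen (G : set X) : set (set (pt G -> \bar R)) :=
  [set A | exists (O : set (pt G)) (alpha : R), open_in O /\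
     A = [set h | (ereal_inf [set h y | y in O] < alpha%:E)%E]].

End MetricDefs.

(* A complete probability measure on (F_K(G), E): the probability P lives on
   an abstract measurable type T identified with F_K(G) through the
   bijection ev : T -> F_K(G); its sigma-algebra is the P-completion of
   (the pull-back of) the Effros sigma-field E. *)
Definition complete_prob_on_FK {R : realType} {X : Type} (d : X -> X -> R)
  (G : set X) (K : R) {dT : measure_display} {T : measurableType dT}
  (P : probability T R) (ev : T -> (pt G -> \bar R)) : Prop :=
  [/\ injective ev,
      range ev = FK d K,
      (forall A, effros_gen d (G:=G) A -> measurable (ev @^-1` A)),
      measure_is_complete P &
      (forall A : set T, measurable A ->
         exists2 B : set T,
           <<s [set ev @^-1` E | E in effros_gen d (G:=G)] >> B &
           P.-negligible ((A `\` B) `|` (B `\` A)))].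

Definition mean_fun {R : realType} {X : Type} (G : set X)
  {dT : measure_display} {T : measurableType dT}
  (P : probability T R) (ev : T -> (pt G -> \bar R)) : pt G -> \bar R :=
  fun x => (\int[P]_f ev f x)%E.

Definition in_frakP {R : realType} {X : Type} (d : X -> X -> R)
  (G : set X) (K : R) {dT : measure_display} {T : measurableType dT}
  (P : probability T R) (ev : T -> (pt G -> \bar R)) : Prop :=
  [/\ complete_prob_on_FK d K P ev,
      lsc_on d (mean_fun P ev),
      (forall x, mean_fun P ev x != -oo%E),
      K_convex d K (mean_fun P ev) &
      exists x, mean_fun P ev x \is a fin_num].

(* Main.v *)
Require Import Defs.
From HB Require Import structures.
From mathcomp Require Import all_boot all_order all_algebra.
From mathcomp Require Import all_classical all_reals all_analysis.
From mathcomp Require Import lra ring measurable_realfun.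
Import Order.TTheory GRing.Theory Num.Theory.
Local Open Scope classical_set_scope.
Local Open Scope ring_scope.


Lemma maxr_id {R : realType} (u : R) : Num.max u 0 = Num.max (- u) 0 + u.
Proof. rewrite !maxEle; case: ifPn => h1; case: ifPn => h2; lra. Qed.

Section ER.
Context {R : realType}.
Local Open Scope ereal_scope.

Ltac ecl := rewrite /= ?maxye ?maxey ?maxNye ?maxeNy -?EFin_max ?addye ?addey ?addNye ?addeNy ?maxye ?maxey ?maxNye ?maxeNy ?add0e ?adde0 ?leey //.

Lemma ptw_id (x y : \bar R) : x != -oo -> y != -oo ->
  maxe (x - y) 0 + maxe (- x) 0 + maxe y 0 = maxe (- (x - y)) 0 + maxe x 0 + maxe (- y) 0.
Proof.
case: x => [r| |] // _; case: y => [s| |] // _ /=.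
- rewrite -!EFin_max -!EFinD; congr EFin.
  rewrite (maxr_id (r - s)) (maxr_id r) (maxr_id s); lra.
- ecl.
- ecl.
- ecl.
Qed.

Lemma ptw_le (x y : \bar R) : x != -oo -> y != -oo ->
  maxe (- (x - y)) 0 <= maxe (- x) 0 + maxe y 0.
Proof.
case: x => [r| |] // _; case: y => [s| |] // _ /=.
- rewrite -!EFin_max -!EFinD lee_fin.
  by rewrite !maxEle; case: ifPn => h1; case: ifPn => h2; case: ifPn => h3; lra.
- by ecl.
- ecl. by rewrite lee_fin le_max lexx orbT.
- have -> : maxe (+oo : \bar R) 0 = +oo by [].
  by rewrite maxNye ?addey ?leey.
Qed.
End ER.

Section ER2.
Context {R : realType}.
Local Open Scope ereal_scope.
Lemma ealg (Hp Hn Ap An Bp Bn : \bar R) :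
  Hp + An + Bp = Hn + Ap + Bn ->
  Hn <= An + Bp ->
  Ap - An != -oo ->
  Bp - Bn \is a fin_num ->
  0 <= Bn -> 0 <= Bp -> 0 <= An -> 0 <= Ap -> 0 <= Hn -> 0 <= Hp ->
  Hp - Hn = Ap - An - (Bp - Bn).
Proof.
move=> E L ia; rewrite fin_numB => /andP[].
case: Bp E L => [bp| |] // E L _; case: Bn E => [bn| |] // E _ _ _.
case: An E L ia => [an| |] E L ia; last by rewrite leeNy_eq.
  2: by move: ia; clear E; case: Ap.
case: Hn E L => [hn| |] E L; [| by rewrite leye_eq in L | by rewrite leeNy_eq].
move=> _ _.
case: Hp E => [hp| |] E; case: Ap E ia => [ap| |] E ia //; try by rewrite leeNy_eq.
- move=> _ _; move: E; rewrite -!EFinD => -[] E; congr EFin; lra.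
Qed.
End ER2.

Section KeyInt.
Local Open Scope ereal_scope.

Lemma key_int d (T : measurableType d) (R : realType) (mu : {measure set T -> \bar R})
  (a b : T -> \bar R) :
  measurable_fun setT a -> measurable_fun setT b ->
  (forall t, a t != -oo) -> (forall t, b t != -oo) ->
  \int[mu]_t a t != -oo -> \int[mu]_t b t \is a fin_num ->
  \int[mu]_t (a t - b t) = \int[mu]_t a t - \int[mu]_t b t.
Proof.
move=> ma mb an bn ia ib.
set h := fun t => a t - b t.
have mh : measurable_fun setT h by exact: emeasurable_funB.
have mP f : measurable_fun setT f -> measurable_fun setT f^\+ :=
  @measurable_funepos _ _ _ _ f.
have mN f : measurable_fun setT f -> measurable_fun setT f^\- :=
  @measurable_funeneg _ _ _ _ f.
have gP (f : T -> \bar R) t : setT t -> 0 <= f^\+ t by move=> _; rewrite funeposE le_max lexx orbT.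
have gN (f : T -> \bar R) t : setT t -> 0 <= f^\- t by move=> _; rewrite funenegE le_max lexx orbT.
have E1 : \int[mu]_t (h^\+ t + a^\- t + b^\+ t) = \int[mu]_t (h^\- t + a^\+ t + b^\- t).
  apply: eq_integral => t _; rewrite !funeposE !funenegE; exact: ptw_id.
rewrite !ge0_integralD //= in E1; try (by move=> t _; apply: adde_ge0; [exact: gP|exact: gN]);
  try (by move=> t _; apply: adde_ge0; [exact: gN|exact: gP]);
  try (by apply: emeasurable_funD; [exact: mP|exact: mN]);
  try (by apply: emeasurable_funD; [exact: mN|exact: mP]); try exact: mP; try exact: mN.
have L1 : \int[mu]_t h^\- t <= \int[mu]_t a^\- t + \int[mu]_t b^\+ t.
  rewrite -ge0_integralD //; try (by apply: gN); try (by apply: gP);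
    try (by apply: mN); try (by apply: mP).
  apply: ge0_le_integral => //; try (by apply: gN); try (by apply: mN);
    try (by apply: emeasurable_funD; [apply: mN|apply: mP]).
  by move=> t _; rewrite !funeposE !funenegE; exact: ptw_le.
rewrite (integralE mu setT h) (integralE mu setT a) (integralE mu setT b) in ia ib *.
have := integral_ge0 mu (gP h); have := integral_ge0 mu (gN h);
have := integral_ge0 mu (gP a); have := integral_ge0 mu (gN a);
have := integral_ge0 mu (gP b); have := integral_ge0 mu (gN b).
move: E1 L1 ia ib.
move: (\int[mu]_x h^\+ x) => Hp. move: (\int[mu]_x h^\- x) => Hn.
move: (\int[mu]_x a^\+ x) => Ap. move: (\int[mu]_x a^\- x) => An.
move: (\int[mu]_x b^\+ x) => Bp. move: (\int[mu]_x b^\- x) => Bn.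
exact: ealg.
Qed.

End KeyInt.


Lemma meas_eval (R : realType) (X : Type) (dist : X -> X -> R) (G : set X) dT
  (T : measurableType dT) (ev : T -> pt G -> \bar R) :
  (forall x y z, dist x z <= dist x y + dist y z) -> (forall x, dist x x = 0) ->
  (forall t, lsc_on dist (ev t)) ->
  (forall A, effros_gen dist (G:=G) A -> measurable (ev @^-1` A)) ->
  forall x : pt G, measurable_fun setT (fun t => ev t x).
Proof.
move=> tri d0 lsc meff x.
eapply (@measurability _ _ _ _ setT (fun t => ev t x) (@ErealGenOInfty.G R)).
exact: ErealGenOInfty.measurableE.
move=> _ [_ [r ->] <-].
pose B (m : nat) : set (pt G) := [set y | dist (sval x) (sval y) < m.+1%:R^-1].
pose E (m : nat) (al : R) := [set h : pt G -> \bar R |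
   (ereal_inf [set h y | y in B m] < al%:E)%E].
have mE m al : measurable (ev @^-1` E m al).
  apply: meff; exists (B m), al; split => //.
  move=> y By; exists (m.+1%:R^-1 - dist (sval x) (sval y)); first by rewrite subr_gt0.
  move=> z Hz; rewrite /B /=. have := tri (sval x) (sval y) (sval z).
  rewrite /B /= in By => ?. move: Hz By; set e := (m.+1%:R^-1). move=> Hz By. lra.
suff -> : setT `&` (fun t => ev t x) @^-1` `]r%:E, +oo[ =
    \bigcup_k \bigcup_m ~` (ev @^-1` E m (r + k.+1%:R^-1)).
  apply: bigcupT_measurable => k; apply: bigcupT_measurable => m; apply: measurableC; exact: mE.
apply/seteqP; split => t /=.
- rewrite in_itv /= andbT => -[_ hr].
  have [k hk] : exists k : nat, ((r + k.+1%:R^-1)%:E < ev t x)%E.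
    move: hr; case: (ev t x) => [v| |] //= hr.
      rewrite lte_fin in hr; have [k hk] := ltr_add_invr hr; exists k; by rewrite lte_fin.
    by exists 0%N; rewrite ltry.
  have [rho rho0 Hrho] := lsc t x _ hk.
  have [m hm] := ltr_add_invr rho0.
  exists k => //; exists m => //.
  rewrite /E /= => /ereal_inf_lt [_ [y By <-]] Hlt.
  have h2 : ((r + k.+1%:R^-1)%:E < ev t y)%E.
    apply: Hrho; rewrite /B /= in By; rewrite add0r in hm; exact: lt_trans By hm.
  by move: (lt_trans h2 Hlt); rewrite ltxx.
- move=> [k _ [m _ Hn]]; split => //; rewrite in_itv /= andbT.
  have h1 : ((r + k.+1%:R^-1)%:E <= ereal_inf [set ev t y | y in B m])%E.
    by rewrite leNgt; apply/negP.
  have h2 : (ereal_inf [set ev t y | y in B m] <= ev t x)%E.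
    by apply: ereal_inf_lbound; exists x => //; rewrite /B /= d0 invr_gt0 ltr0n.
  apply: lt_le_trans (le_trans h1 h2).
  by rewrite lte_fin ltrDl invr_gt0 ltr0n.
Qed.


Lemma real_lim (R : realType) (K D g0 gx : R) : 0 < K -> 0 <= D ->
  (forall t, 0 < t <= 1 -> g0 <= (1-t)*g0 + t*gx - K/2*t*(1-t)*D) ->
  D <= 2/K*(gx - g0).
Proof.
move=> K0 D0 H.
have H1 := H 1; rewrite ltr01 lexx /= in H1; have {}H1 := H1 isT.
have g01 : g0 <= gx.
  have e1 : (1-1)*g0 + 1*gx - K/2*1*(1-1)*D = gx by ring.
  lra.
set A := K/2*D.
have A0 : 0 <= A by rewrite /A; apply: mulr_ge0 => //; apply: divr_ge0 => //; exact: ltW.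
suff HA : A <= gx - g0.
  have -> : D = 2/K * A by rewrite /A; field; rewrite lt0r_neq0.
  by apply: ler_wpM2l => //; apply: divr_ge0 => //; exact: ltW.
rewrite leNgt; apply/negP => Alt.
set c := A - (gx - g0).
have c0 : 0 < c by rewrite /c subr_gt0.
have Apos : 0 < A by apply: le_lt_trans Alt; rewrite subr_ge0.
set t := c / (2 * A).
have tA : t * A = c / 2 by rewrite /t; field; rewrite lt0r_neq0.
have t0 : 0 < t by rewrite /t divr_gt0 // mulr_gt0.
have t1 : t <= 1.
  have : c <= A by rewrite /c; lra.
  move=> cA; rewrite /t ler_pdivrMr; last by apply: mulr_gt0.
  lra.
have Ht := H t; rewrite t0 t1 /= in Ht; have {}Ht := Ht isT.
have e : (1-t)*g0 + t*gx - K/2*t*(1-t)*D - g0 = t * ((gx - g0) - A) + t * (t * A).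
  by rewrite /A; ring.
have e2 : t * ((gx - g0) - A) + t * (t * A) = - (t * (c / 2)).
  by rewrite tA /c; field.
have : 0 < t * (c / 2) by apply: mulr_gt0 => //; apply: divr_gt0.
lra.
Qed.


Theorem proposition6p5 (R : realType) (X : Type) (d : X -> X -> R)
  (G : set X) (K : R) (dT : measure_display) (T : measurableType dT)
  (P : probability T R) (ev : T -> (pt G -> \bar R)) (Emu : pt G) :
  alexandrov_space d -> closed_set d G -> geod_convex d G ->
  separable_set d G -> 0 < K ->
  in_frakP d K P ev ->
  (forall x : pt G, (mean_fun P ev Emu <= mean_fun P ev x)%E) ->
  forall x : pt G,
    (((d (proj1_sig x) (proj1_sig Emu)) ^+ 2)%:E
      <= (2 / K)%:E * \int[P]_f (ev f x - ev f Emu))%E.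
Proof.
move=> [[dge0 deq0 dsym dtri] _ geo _] _ gcG _ K0 [[_ rng meff _ _] _ gNy Kcg [x0 fx0]] hmin x.
have FKt t : FK d K (ev t) by rewrite -rng; exists t.
have lsct t : lsc_on d (ev t) by case: (FKt t).
have nNy t y : ev t y != -oo%E by case: (FKt t).
have d0 y : d y y = 0 by apply/deq0.
have mev := @meas_eval R X d G dT T ev dtri d0 lsct meff.
set g := mean_fun P ev.
have g0fin : g Emu \is a fin_num.
  move: (hmin x0) fx0 (gNy Emu); rewrite -/g.
  by case: (g Emu) => [r| |] //; case: (g x0).
rewrite (@key_int _ _ _ P (fun f => ev f x) (fun f => ev f Emu)) //.
2: exact: gNy.
have -> : (\int[P]_t ev t x)%E = g x by [].
have -> : (\int[P]_t ev t Emu)%E = g Emu by [].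
rewrite -(fineK g0fin); set g0 := fine (g Emu).
have hE : g Emu = g0%:E by rewrite /g0 fineK.
case hx: (g x) => [gx| |].
- rewrite -EFinB -EFinM lee_fin dsym.
  apply: real_lim => //; first by rewrite sqr_ge0.
  have [gam hgam] := geo (sval Emu) (sval x).
  move=> t /andP[t0 t1]; have ht : 0 <= t <= 1 by rewrite ltW.
  have Gz := gcG _ _ gam t (proj2_sig Emu) (proj2_sig x) hgam ht.
  have := Kcg Emu x (exist _ (gam t) Gz) gam t hgam ht erefl.
  have := hmin (exist _ (gam t) Gz).
  rewrite -/g hx hE => h1 h2.
  have := le_trans h1 h2.
  by rewrite -!EFinM -!EFinD -?EFinN -?EFinD lee_fin.
- rewrite /= mulry gtr0_sg ?divr_gt0 // mul1e; exact: leey.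
- by move: (gNy x); rewrite -/g hx.
Qed.
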